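(* Let $u_1,\ldots,u_N\ge 2$ be positive integers, and suppose there is an index set $\Gamma\subset\{1,\ldots,N-1\}$ such that $\prod_{k\in\Gamma}u_k=u_N\cdot\prod_{k\in\Gamma^c}u_k$, where $\Gamma^c=\{1,\ldots,N-1\}\setminus\Gamma$. Set $u_{\max}:=\max\{u_1,\ldots,u_{N-1}\}$. Let ${\bm x}=(x(0),\ldots,x(N-1))\in\mathbb{C}^N$ be the vector with $x(0)=u_{\max}^{N-1}$ whose $Z$-transform is $$X(z):=\sum_{k=0}^{N-1}x(k)z^{-k}=x(0)z^{-(N-1)}(z-\beta_1)\cdots(z-\beta_{N-1}),$$ where $\beta_k=-u_k$ if $k\in\Gamma$ and $\beta_k=-1/u_k$ if $k\in\Gamma^c$. Let ${\bm x}_m\in\mathbb{C}^N$ satisfy $\|{\bm x}_m-{\bm x}\|\le u_{\max}^{-2N}$ (Euclidean norm), and let $X_m(z)=\sum_{k=0}^{N-1}x_m(k)z^{-k}$ be its $Z$-transform. Then for each $k\in\{1,\ldots,N-1\}$: (i) if $1/\beta_k$ is not a zero of $X(z)$, then $|X_m(1/\beta_k)|\ge|X_m(\beta_k)|+c_0$ with $c_0:=1-2u_{\max}^{-N}$; (ii) if $1/\beta_k$ is a zero of $X(z)$, then $\max\{|X_m(\beta_k)|,|X_m(1/\beta_k)|\}\le u_{\max}^{-N}$. *)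

(* Defs.v *)
From mathcomp Require Import all_boot all_order all_algebra.
Set Implicit Arguments. Unset Strict Implicit. Unset Printing Implicit Defensive.
Import Order.TTheory GRing.Theory Num.Theory.
Local Open Scope ring_scope.

(* Complex numbers: any numeric closed field C (e.g. algC or R[i]),
   with its norm `|z| (valued in C). Vectors of C^N are nat -> C,
   of which only the entries 0..N-1 are used. *)

Definition Ztr (C : numClosedFieldType) (N : nat) (x : nat -> C) (z : C) : C :=
  \sum_(k < N) x k * z ^- k.

Definition enorm (C : numClosedFieldType) (N : nat) (x : nat -> C) : C :=
  sqrtC (\sum_(k < N) `|x k| ^+ 2).

Definition umax (N : nat) (u : nat -> nat) : nat := \max_(1 <= k < N) u k.

Definition beta (C : numClosedFieldType) (u : nat -> nat) (Gam : pred nat) (k : nat) : C :=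
  if Gam k then - (u k)%:R else - ((u k)%:R)^-1.

(* Main.v *)
Require Import Defs.
From mathcomp Require Import all_boot all_order all_algebra.
From mathcomp Require Import zify ring.
Import Order.TTheory GRing.Theory Num.Theory.
Local Open Scope ring_scope.

Section Helpers.
Variable C : numClosedFieldType.

Lemma natfrac (p q r s : nat) : (0 < q)%N -> (0 < s)%N -> (r * q <= p * s)%N ->
  (r%:R / s%:R : C) <= p%:R / q%:R.
Proof.
move=> q0 s0 h.
rewrite ler_pdivlMr ?ltr0n // mulrAC ler_pdivrMr ?ltr0n // -!natrM ler_nat.
by [].
Qed.

Lemma normBnat (n m : nat) :
  `|(n%:R - m%:R : C)| = (if m <= n then n - m else m - n)%N%:R.
Proof.
case: leqP => h.
  by rewrite -natrB // normr_nat.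
by rewrite -opprB normrN -natrB ?normr_nat // ltnW.
Qed.

Lemma norm1frac (m n : nat) : (0 < n)%N ->
  `|1 - (m%:R / n%:R : C)| = (if m <= n then n - m else m - n)%N%:R / n%:R.
Proof.
move=> n0; have nz : (n%:R : C) != 0 by rewrite pnatr_eq0 -lt0n.
by rewrite -{1}(divff nz) -mulrBl normrM normfV normr_nat normBnat.
Qed.

Lemma frac_bound (m n U : nat) : (0 < n)%N -> (0 < U)%N -> m <> n ->
  (n <= (if m <= n then n - m else m - n)%N * U)%N ->
  (U%:R^-1 : C) <= `|1 - (m%:R / n%:R : C)|.
Proof.
move=> n0 U0 mn h; rewrite norm1frac // -div1r.
by have := @natfrac _ n 1 U n0 U0; rewrite mul1n => /(_ _ h).
Qed.

Lemma factor_bound u Gam k j (U : nat) :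
  (2 <= u k <= U)%N -> (2 <= u j <= U)%N ->
  1 - beta C u Gam k * beta C u Gam j != 0 ->
  (U%:R^-1 : C) <= `|1 - beta C u Gam k * beta C u Gam j|.
Proof.
rewrite /beta; move: (u k) (u j) => a b /andP[a2 aU] /andP[b2 bU].
have a0 : (a%:R : C) != 0 by rewrite pnatr_eq0; lia.
have b0 : (b%:R : C) != 0 by rewrite pnatr_eq0; lia.
case: (Gam k); case: (Gam j); rewrite mulrNN.
- have -> : (a%:R * b%:R : C) = (a * b)%:R / 1%:R by rewrite divr1 natrM.
  move=> nz; have mn : (a * b)%N <> 1%N.
    by move=> e; move: nz; rewrite e divr1 subrr eqxx.
  apply: frac_bound; [lia|lia|done|case: ifP => ?; nia].
- have -> : (a%:R * b%:R^-1 : C) = a%:R / b%:R by [].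
  move=> nz; have mn : a <> b.
    by move=> e; move: nz; rewrite e divff // subrr eqxx.
  apply: frac_bound; [lia|lia|done|case: ifP => ?; nia].
- have -> : (a%:R^-1 * b%:R : C) = b%:R / a%:R by rewrite mulrC.
  move=> nz; have mn : b <> a.
    by move=> e; move: nz; rewrite e divff // subrr eqxx.
  apply: frac_bound; [lia|lia|done|case: ifP => ?; nia].
- have -> : (a%:R^-1 * b%:R^-1 : C) = 1%:R / (a * b)%:R by rewrite natrM invfM mul1r.
  move=> nz; have mn : 1%N <> (a * b)%N.
    by move=> e; move: nz; rewrite -e divff ?subrr ?eqxx ?oner_eq0.
  apply: frac_bound; [lia|lia|done|case: ifP => ?; nia].
Qed.

Lemma geom (U N : nat) : (2 <= U)%N -> (\sum_(k < N) U ^ k <= U ^ N)%N.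
Proof.
move=> U2; elim: N => [|N IH]; first by rewrite big_ord0.
rewrite big_ord_recr /= expnS; move: IH; move: (\sum_(i < N) U ^ i)%N (U ^ N)%N.
move=> a b h; nia.
Qed.

Lemma perturb N (U : nat) (x xm : nat -> C) (z : C) : (2 <= U)%N -> z != 0 ->
  `|z^-1| <= U%:R -> enorm N (fun k => xm k - x k) <= U%:R ^- (2 * N) ->
  `|Ztr N xm z - Ztr N x z| <= U%:R ^- N.
Proof.
move=> U2 z0 hz hn.
have U0 : (U%:R : C) != 0 by rewrite pnatr_eq0; lia.
have -> : Ztr N xm z - Ztr N x z = \sum_(k < N) (xm k - x k) * z ^- k.
  by rewrite /Ztr -sumrB; apply: eq_bigr => i _; rewrite mulrBl.
apply: le_trans (ler_norm_sum _ _ _) _.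
set e := enorm N (fun k => xm k - x k).
have ek : forall i : 'I_N, `|xm i - x i| <= e.
  move=> i; rewrite /e /enorm -(sqrCK (normr_ge0 (xm i - x i))).
  rewrite ler_sqrtC ?nnegrE ?exprn_ge0 ?sumr_ge0 // => [|j _]; last by rewrite exprn_ge0.
  rewrite (bigD1 i) //= lerDl sumr_ge0 // => j _; by rewrite exprn_ge0.
have e0 : 0 <= e by rewrite /e /enorm sqrtC_ge0 sumr_ge0 // => j _; rewrite exprn_ge0.
apply: le_trans (_ : \sum_(k < N) e * U%:R ^+ k <= _).
  apply: ler_sum => i _; rewrite normrM -exprVn normrX.
  apply: ler_pM; rewrite ?normr_ge0 ?exprn_ge0 ?ek //.
  by apply: lerXn2r; rewrite ?nnegrE ?normr_ge0 ?ler0n.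
rewrite -mulr_sumr; apply: le_trans (_ : e * (U ^ N)%:R <= _).
  apply: ler_wpM2l => //.
  under eq_bigr do rewrite -natrX.
  by rewrite -natr_sum ler_nat geom.
apply: le_trans (_ : U%:R ^- (2 * N) * (U ^ N)%:R <= _).
  by apply: ler_wpM2r => //; rewrite ler0n.
by rewrite natrX mul2n -addnn exprD invfM -mulrA mulVf ?mulr1 // expf_neq0.
Qed.
End Helpers.

Theorem lemma3p1 (C : numClosedFieldType) (N : nat) (u : nat -> nat)
  (Gam : pred nat) (x xm : nat -> C) :
  (forall k, (1 <= k <= N)%N -> (2 <= u k)%N) ->
  (forall k, Gam k -> (1 <= k < N)%N) ->
  (\prod_(1 <= k < N | Gam k) u k = u N * \prod_(1 <= k < N | ~~ Gam k) u k)%N ->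
  x 0%N = (umax N u)%:R ^+ (N.-1) ->
  (forall z : C, z != 0 ->
     Ztr N x z = x 0%N * z ^- (N.-1) * \prod_(1 <= k < N) (z - beta C u Gam k)) ->
  enorm N (fun k => xm k - x k) <= (umax N u)%:R ^- (2 * N) ->
  forall k, (1 <= k < N)%N ->
    (Ztr N x (beta C u Gam k)^-1 != 0 ->
       `|Ztr N xm (beta C u Gam k)^-1| >=
         `|Ztr N xm (beta C u Gam k)| + (1 - 2 * (umax N u)%:R ^- N))
    /\
    (Ztr N x (beta C u Gam k)^-1 = 0 ->
       Num.max `|Ztr N xm (beta C u Gam k)| `|Ztr N xm (beta C u Gam k)^-1|
         <= (umax N u)%:R ^- N).
Proof.
move=> hu _ _ hx0 hZ hn k hk.
set U := umax N u.
have uleU : forall j, (1 <= j < N)%N -> (u j <= U)%N.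
  move=> j hj; rewrite /U /umax; apply: (@leq_bigmax_seq _ _ xpredT) => //.
  by rewrite mem_index_iota.
have hu' : forall j, (1 <= j < N)%N -> (2 <= u j <= U)%N.
  move=> j hj; rewrite uleU // andbT; apply: hu; lia.
have U2 : (2 <= U)%N by case/andP: (hu' k hk) => a b; lia.
have U0 : (U%:R : C) != 0 by rewrite pnatr_eq0; lia.
set b := beta C u Gam k.
have uk0 : ((u k)%:R : C) != 0 by rewrite pnatr_eq0; case/andP: (hu' k hk) => ? ?; lia.
have ukU : ((u k)%:R : C) <= U%:R by rewrite ler_nat uleU.
have uk1 : ((u k)%:R^-1 : C) <= U%:R.
  case/andP: (hu' k hk) => ? ?.
  apply: (le_trans _ ukU); apply: (@le_trans _ _ 1).
    by rewrite invf_le1 ?ltr0n ?ler1n //; lia.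
  by rewrite ler1n; lia.
have b0 : b != 0 by rewrite /b /beta; case: (Gam k); rewrite oppr_eq0 ?invr_eq0.
have nb : `|b| <= U%:R /\ `|b^-1| <= U%:R.
  by rewrite /b /beta; case: (Gam k); rewrite ?invrN ?invrK !normrN ?normfV normr_nat.
have Zb : Ztr N x b = 0.
  rewrite hZ //; apply/eqP; rewrite mulf_eq0 prodf_seq_eq0; apply/orP; right.
  by apply/hasP; exists k; rewrite ?mem_index_iota // subrr eqxx.
have pb := @perturb C N U x xm b U2 b0 (proj2 nb) hn.
have pbi := @perturb C N U x xm b^-1 U2 (invr_neq0 b0) (ltac:(by rewrite invrK; case: nb)) hn.
set d := U%:R ^- N in pb pbi *.
split.
- move=> hne.
  have key : 1 <= `|Ztr N x b^-1|.
    move: hne; rewrite hZ ?invr_neq0 // exprVn invrK hx0.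
    rewrite -subn1 -(prodr_const_nat 1 N b) -mulrA -big_split /=.
    under eq_bigr do rewrite mulrBr mulfV //.
    move=> hne.
    have fnz : forall j, (1 <= j < N)%N -> 1 - b * beta C u Gam j != 0.
      move=> j hj; apply/negP => /eqP f0; move: hne; rewrite mulf_eq0 negb_or.
      case/andP=> _; rewrite prodf_seq_eq0 => /hasP; apply; exists j.
        by rewrite mem_index_iota.
      by rewrite f0 eqxx.
    rewrite normrM normr_prod normrX normr_nat.
    apply: le_trans (_ : U%:R ^+ (N - 1) * \prod_(1 <= j < N) U%:R^-1 <= _).
      by rewrite prodr_const_nat exprVn mulfV // expf_neq0.
    apply: ler_wpM2l; first by rewrite exprn_ge0 // ler0n.
    rewrite !big_seq; apply: ler_prod => j; rewrite mem_index_iota => hj.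
    rewrite invr_ge0 ler0n /=; apply: factor_bound; rewrite ?hu' ?fnz //.
  have h1 : `|Ztr N xm b| <= d by move: pb; rewrite Zb subr0.
  have h2 : 1 - d <= `|Ztr N xm b^-1|.
    rewrite lerBlDr; apply: le_trans key _.
    have -> : Ztr N x b^-1 = Ztr N xm b^-1 - (Ztr N xm b^-1 - Ztr N x b^-1) by ring.
    by apply: le_trans (ler_normB _ _) _; rewrite lerD2l.
  apply: le_trans h2.
  have -> : 1 - d = d + (1 - 2 * d) by ring.
  by rewrite lerD2r.
- move=> h0.
  have h1 : `|Ztr N xm b| <= d by move: pb; rewrite Zb subr0.
  have h2 : `|Ztr N xm b^-1| <= d by move: pbi; rewrite h0 subr0.
  by rewrite /Order.max; case: ifP.
Qed.
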